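(* Let $H$ be a finite simple graph on $n$ vertices, and let $KH_1,KH_2,\ldots,KH_s$ be the replication cliques of $H$ (in some chosen order), of sizes $y_1,\ldots,y_s\ge 1$. For $i=1,\ldots,s$ let $n_i$ denote the number of non-edges between a (any) vertex of $KH_i$ and the vertices of $KH_1\cup\cdots\cup KH_{i-1}$. Then $$\rho(H) \leq n+ \sum_{i=1}^s n_i.$$ Moreover, among all orderings of the replication cliques, the right-hand side is smallest when the ordering satisfies $y_1 \le y_2 \le \cdots \le y_s$.
   Context: All graphs are finite and simple. A coloring means a proper vertex coloring; an induced subgraph is rainbow if all its vertices have pairwise different colors. For a graph $H$, $\rho(H)$ is the least number $m$ such that there exists a graph $G$ on $m$ vertices such that every proper vertex coloring of $G$ contains a rainbow induced subgraph isomorphic to $H$. On $V(H)$ define $x\sim y$ iff $x=y$, or $xy$ is an edge of $H$ and $x,y$ have exactly the same neighbors in $H-\{x,y\}$; this is an equivalence relation whose classes are cliques, called the replication cliques of $H$. Since vertices in one replication clique have the same neighbors outside it, $n_i$ does not depend on the choice of vertex in $KH_i$. A non-edge is a pair of distinct non-adjacent vertices. *)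

(* Defs.v *)
From mathcomp Require Import all_boot.
Set Implicit Arguments. Unset Strict Implicit. Unset Printing Implicit Defensive.

Definition simple_graph (V : finType) (e : rel V) : Prop :=
  symmetric e /\ irreflexive e.

Definition proper_coloring (V : finType) (e : rel V) (c : V -> nat) : Prop :=
  forall u v, e u v -> c u <> c v.

(* Every proper coloring of G contains a rainbow induced subgraph isomorphic to H:
   an injective f : V(H) -> V(G) which is an induced embedding (preserves
   adjacency and non-adjacency) and whose image gets pairwise distinct colors. *)
Definition rainbow_forcing (T : finType) (e : rel T) (V : finType) (eG : rel V) : Prop :=
  forall c : V -> nat, proper_coloring eG c ->
    exists f : T -> V,
      injective f /\ (forall x y, eG (f x) (f y) = e x y) /\ injective (fun x => c (f x)).

(* "rho(H) <= N": since rho(H) is the LEAST m for which a graph G on m vertices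
   with the forcing property exists, rho(H) <= N iff such a graph exists on some
   m <= N vertices. *)
Definition rho_le (T : finType) (e : rel T) (N : nat) : Prop :=
  exists m, m <= N /\
    exists eG : rel 'I_m, simple_graph eG /\ rainbow_forcing e eG.

Definition repl (T : finType) (e : rel T) (x y : T) : bool :=
  (x == y) || (e x y && [forall z, ((z != x) && (z != y)) ==> (e x z == e y z)]).

Definition repl_class (T : finType) (e : rel T) (x : T) : {set T} :=
  [set y | repl e x y].

Definition repl_ordering (T : finType) (e : rel T) (cl : seq {set T}) : Prop :=
  uniq cl /\ (forall A, A \in cl <-> exists x, A = repl_class e x).

(* n_i (i is 0-based here): number of non-edges between a vertex x of KH_i
   (the one picked by [pick]) and the vertices of the earlier cliques. *)
Definition n_i (T : finType) (e : rel T) (cl : seq {set T}) (i : nat) : nat :=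
  match [pick x in nth set0 cl i] with
  | Some x => #|[set z in \bigcup_(j < i) nth set0 cl j | (z != x) && ~~ e x z]|
  | None => 0
  end.

Definition n_sum (T : finType) (e : rel T) (cl : seq {set T}) : nat :=
  \sum_(i < size cl) n_i e cl i.

(* Main.v *)
Require Import Defs.
From mathcomp Require Import all_boot.
Set Implicit Arguments. Unset Strict Implicit. Unset Printing Implicit Defensive.

Section Repl.
Variables (T : finType) (e : rel T).
Hypothesis esym : symmetric e.
Hypothesis eirr : irreflexive e.

Lemma repl_refl x : repl e x x.
Proof. by rewrite /repl eqxx. Qed.

Lemma repl_edge x y : repl e x y -> x != y -> e x y.
Proof. by rewrite /repl => /orP[/eqP->|/andP[]//]; rewrite eqxx. Qed.

Lemma repl_nb x y z : repl e x y -> z != x -> z != y -> e x z = e y z.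
Proof.
rewrite /repl => /orP[/eqP->//|/andP[_ /forallP H]] zx zy.
by have /implyP := H z; rewrite zx zy => /(_ isT) /eqP.
Qed.

Lemma repl_sym x y : repl e x y -> repl e y x.
Proof.
move=> Hxy; case: (eqVneq x y) => [->|nxy]; first exact: repl_refl.
apply/orP; right; rewrite esym repl_edge //=.
apply/forallP=> z; apply/implyP=> /andP[zy zx].
by rewrite (repl_nb Hxy) // eqxx.
Qed.

Lemma repl_trans0 x y w : repl e x y -> repl e x w -> repl e y w.
Proof.
move=> Hxy Hxw.
case: (eqVneq y w) => [->|nyw]; first exact: repl_refl.
case: (eqVneq y x) => [->//|nyx].
case: (eqVneq w x) => [->|nwx]; first exact: repl_sym.
have exw : e x w by apply: repl_edge; rewrite // eq_sym.
have exy : e x y by apply: repl_edge; rewrite // eq_sym.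
apply/orP; right; apply/andP; split.
  by rewrite -(repl_nb Hxy) // eq_sym.
apply/forallP=> z; apply/implyP=> /andP[zy zw].
case: (eqVneq z x) => [->|nzx]; first by rewrite esym exy esym exw.
by rewrite -(repl_nb Hxy) // (repl_nb Hxw).
Qed.

Lemma repl_trans x y w : repl e x y -> repl e y w -> repl e x w.
Proof. by move=> /repl_sym; apply: repl_trans0. Qed.

Lemma unif x x' w w' : repl e x x' -> repl e w w' -> ~~ repl e x w ->
  e x w = e x' w'.
Proof.
move=> Hx Hw Hn.
have wx : w != x by apply: contraNneq Hn => ->; apply: repl_refl.
have wx' : w != x' by apply: contraNneq Hn => ->.
have x'w : x' != w by rewrite eq_sym.
have x'w' : x' != w'.
  apply: contraNneq Hn => E; apply: (repl_trans Hx); rewrite E; exact: repl_sym.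
by rewrite (repl_nb Hx) // esym (repl_nb Hw) // esym.
Qed.

Variable cl : seq {set T}.
Hypothesis Hcl : repl_ordering e cl.

Definition idx x := index (repl_class e x) cl.

Lemma class_in x : repl_class e x \in cl.
Proof. by apply/Hcl.2; exists x. Qed.

Lemma idx_lt x : idx x < size cl.
Proof. by rewrite /idx index_mem class_in. Qed.

Lemma nth_idx x : nth set0 cl (idx x) = repl_class e x.
Proof. by rewrite nth_index // class_in. Qed.

Lemma class_eq x y : repl e x y -> repl_class e x = repl_class e y.
Proof.
move=> H; apply/setP=> z; rewrite !inE; apply/idP/idP => Hz.
  exact: repl_trans (repl_sym H) Hz.
exact: repl_trans H Hz.
Qed.

Lemma idx_eq x y : (idx x == idx y) = repl e x y.
Proof.
apply/idP/idP => [/eqP H|H]; last by rewrite /idx (class_eq H).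
have : y \in repl_class e x by rewrite -nth_idx H nth_idx inE repl_refl.
by rewrite inE.
Qed.

Lemma mem_nth_cl i z : i < size cl -> (z \in nth set0 cl i) = (idx z == i).
Proof.
move=> Hi; have [r Hr] : exists r, nth set0 cl i = repl_class e r.
  by apply/Hcl.2; rewrite mem_nth.
have Hri : idx r = i by rewrite /idx -Hr index_uniq // Hcl.1.
by rewrite Hr inE -idx_eq Hri eq_sym.
Qed.

Lemma pick_cl i : i < size cl ->
  exists p, [pick x in nth set0 cl i] = Some p /\ idx p = i.
Proof.
move=> Hi; case: pickP => [p Hp | H].
  by exists p; split => //; apply/eqP; rewrite -mem_nth_cl.
have [r Hr] : exists r, nth set0 cl i = repl_class e r.
  by apply/Hcl.2; rewrite mem_nth.
by have := H r; rewrite Hr inE repl_refl.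
Qed.

Lemma n_i_eq i p : i < size cl -> [pick x in nth set0 cl i] = Some p ->
  n_i e cl i = #|[set z | (idx z < i) && ~~ e p z]|.
Proof.
move=> Hi Hp; have Hpi : idx p = i by apply/eqP; rewrite -mem_nth_cl //;
  move: Hp; case: pickP => // q Hq [<-].
rewrite /n_i Hp; apply: eq_card => z; rewrite !inE.
have -> : (z \in \bigcup_(j < i) nth set0 cl j) = (idx z < i).
  apply/bigcupP/idP => [[j _]|H].
    rewrite mem_nth_cl => [/eqP->//|]; exact: ltn_trans (ltn_ord j) Hi.
  exists (Ordinal H) => //; rewrite mem_nth_cl ?eqxx //.
  exact: ltn_trans H Hi.
case: (ltnP (idx z) i) => //= H.
suff -> : z != p by [].
by apply: contraTneq H => ->; rewrite Hpi ltnn.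
Qed.


Definition Ext := {i : 'I_(size cl) & 'I_(n_i e cl i)}.
Definition VV := (T + Ext)%type.

Definition ci (v : VV) : nat :=
  match v with inl x => idx x | inr t => val (tag t) end.

Definition rep (x0 : T) (v : VV) : T :=
  match v with inl x => x | inr t => odflt x0 [pick x in nth set0 cl (tag t)] end.

Lemma idx_rep x0 v : idx (rep x0 v) = ci v.
Proof.
case: v => [x//|[i j]] /=.
by have [p [-> <-]] := pick_cl (ltn_ord i).
Qed.

Definition eG (x0 : T) (u v : VV) : bool :=
  (u != v) && ((ci u == ci v) || e (rep x0 u) (rep x0 v)).

Lemma eG_simple x0 : simple_graph (eG x0).
Proof.
split => [u v|u]; last by rewrite /eG eqxx.
by rewrite /eG eq_sym (eq_sym (ci u)) esym.
Qed.

Lemma card_VV : #|{: VV}| = #|T| + n_sum e cl.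
Proof.
rewrite card_sum; congr (_ + _).
rewrite /Ext card_tagged sumnE big_map big_enum /n_sum.
by apply: eq_bigr => i _; rewrite card_ord.
Qed.

Section Force.
Variable x0 : T.
Variable c : VV -> nat.
Hypothesis Hc : proper_coloring (eG x0) c.

Definition Inv k (f : T -> VV) :=
  [/\ (forall x, idx x < k -> ci (f x) = idx x),
      (forall x w, idx x < k -> idx w < k -> f x = f w -> x = w) &
      (forall x w, idx x < k -> idx w < idx x -> ~~ e x w -> c (f x) != c (f w))].

Lemma Inv_step k f : k < size cl -> Inv k f -> exists f', Inv k.+1 f'.
Proof.
move=> Hk [I1 I2 I3].
have [p [Hp Hpk]] := pick_cl Hk.
pose A := [set x | idx x == k].
pose B := [set v : VV | ci v == k].
pose Forb := [set z | (idx z < k) && ~~ e p z].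
pose S := [set v in B | [forall z in Forb, c (f z) != c v]].
have cliqueB : {in B &, forall u v, u != v -> c u != c v}.
  move=> u v; rewrite !inE => /eqP Hu /eqP Hv nuv; apply/eqP; apply: Hc.
  by rewrite /eG nuv Hu Hv eqxx.
pose kk : 'I_(size cl) := Ordinal Hk.
pose X := [set (inr (Tagged (fun i : 'I_(size cl) => 'I_(n_i e cl i)) j) : VV)
          | j : 'I_(n_i e cl kk)].
have cardB : #|A| + n_i e cl k <= #|B|.
  have -> : #|A| = #|inl @: A : {set VV}| by rewrite card_imset //; move=> ?? [].
  have -> : n_i e cl k = #|X|.
    rewrite card_imset ?card_ord // => a b [] H.
    have := congr1 (tagged_as (Tagged (fun i : 'I_(size cl) => 'I_(n_i e cl i)) a)) H.
    by rewrite !tagged_asE.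
  have -> : #|inl @: A : {set VV}| + #|X| = #|(inl @: A) :|: X|.
    rewrite cardsU; suff -> : (inl @: A) :&: X = set0 by rewrite cards0 subn0.
    apply/setP => v; rewrite !inE; apply/negbTE/andP => -[/imsetP[? _ ->] /imsetP[? _]] //.
  apply: subset_leq_card; apply/subsetP => v; rewrite !inE => /orP[/imsetP[x]|/imsetP[j]].
    by rewrite inE => Hx -> /=.
  by move=> _ -> /=.
have cardBS : #|B :\: S| <= n_i e cl k.
  rewrite (n_i_eq Hk Hp) -/Forb.
  pose g v := odflt p [pick z in Forb | c (f z) == c v].
  have Hg : {in B :\: S, forall v, g v \in Forb /\ c (f (g v)) = c v}.
    move=> v; rewrite !inE => /andP[Hv1 Hv2]; rewrite Hv2 /= in Hv1.
    rewrite /g; case: pickP => [z /andP[Hz /eqP Hz2] | H] /=.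
      by split => //; rewrite inE in Hz.
    exfalso; move/negP: Hv1; apply; apply/forallP => z; apply/implyP => Hz.
    by have := H z; rewrite Hz /= => ->.
  rewrite -(card_in_imset (f := g)).
    apply: subset_leq_card; apply/subsetP => z /imsetP[v Hv ->].
    by have [] := Hg v Hv.
  move=> u v Hu Hv Huv; apply/eqP; apply: contraT => nuv.
  have := cliqueB u v; rewrite (subsetP (subsetDl B S) u Hu) (subsetP (subsetDl B S) v Hv).
  move/(_ isT isT nuv); have [_ <-] := Hg u Hu; have [_ <-] := Hg v Hv.
  by rewrite Huv eqxx.
have cardAS : #|A| <= #|S|.
  have SB : S \subset B by apply/subsetP => v; rewrite inE => /andP[].
  have := cardsID S B; rewrite (setIidPr SB) => HB.
  by rewrite -(leq_add2r (n_i e cl k)) (leq_trans cardB) // -HB leq_add2l.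
have [h hS hinj] : exists2 h : T -> VV, {in A, forall x, h x \in S} & {in A &, injective h}.
  pose h x := nth (inl p) (enum S) (index x (enum A)).
  have idxS : forall x, x \in A -> index x (enum A) < size (enum S).
    move=> x Hx; rewrite -cardE.
    by apply: leq_trans cardAS; rewrite cardE index_mem mem_enum.
  exists h.
    by move=> x Hx; rewrite -mem_enum mem_nth // idxS.
  move=> x w Hx Hw /eqP; rewrite /h nth_uniq ?enum_uniq ?idxS //.
  move=> /eqP E; rewrite -[x](nth_index x (s := enum A)) ?mem_enum // E.
  by rewrite nth_index ?mem_enum.
have [f' f'k f'nk] : exists2 f' : T -> VV, (forall x, idx x = k -> f' x = h x) &
    (forall x, idx x != k -> f' x = f x).
  exists (fun x => if idx x == k then h x else f x).
    by move=> x Hx; rewrite Hx eqxx.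
  by move=> x Hx; rewrite (negbTE Hx).
exists f'; split.
- move=> x; rewrite ltnS leq_eqVlt => /orP[/eqP Hx|Hx].
    rewrite f'k // Hx; have := hS x; rewrite !inE Hx eqxx => /(_ isT).
    by case/andP => /eqP.
  by rewrite f'nk ?ltn_eqF // I1.
- move=> x w; rewrite !ltnS [idx x <= k]leq_eqVlt [idx w <= k]leq_eqVlt.
  case: (eqVneq (idx x) k) => Hx; case: (eqVneq (idx w) k) => Hw Hx' Hw'.
  + by rewrite !f'k //; apply: hinj; rewrite inE; apply/eqP.
  + rewrite (f'k x) // (f'nk w) // => E; have := hS x; rewrite inE Hx eqxx E => /(_ isT).
    rewrite !inE (I1 w Hw') => /andP[/eqP H _].
    by rewrite H eqxx in Hw.
  + rewrite (f'k w) // (f'nk x) // => E; have := hS w; rewrite inE Hw eqxx -E => /(_ isT).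
    rewrite !inE (I1 x Hx') => /andP[/eqP H _].
    by rewrite H eqxx in Hx.
  + by rewrite !f'nk //; apply: I2; [move: Hx' | move: Hw']; rewrite ?(negbTE Hx) ?(negbTE Hw).
- move=> x w; rewrite ltnS => Hx Hwx Hn.
  have Hw : idx w < k by apply: leq_trans Hwx Hx.
  rewrite (f'nk w); last by rewrite ltn_eqF.
  case: (eqVneq (idx x) k) => Hxk; last first.
    by rewrite (f'nk x) //; apply: I3 => //; rewrite ltn_neqAle Hxk.
  rewrite f'k //.
  have := hS x; rewrite inE Hxk eqxx => /(_ isT); rewrite inE => /andP[_ /forallP H].
  have /implyP := H w; rewrite eq_sym; apply; rewrite inE Hw.
  rewrite -(unif (x := x) (w := w)) ?repl_refl //.
    by rewrite -idx_eq Hpk Hxk.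
  by rewrite -idx_eq Hxk neq_ltn Hw orbT.
Qed.

Lemma Inv_all k : k <= size cl -> exists f, Inv k f.
Proof.
elim: k => [_|k IH Hk].
  by exists inl; split => // x; rewrite ltn0.
have [f Hf] := IH (ltnW Hk).
exact: Inv_step Hk Hf.
Qed.

End Force.

Lemma forcing x0 : rainbow_forcing e (eG x0).
Proof.
move=> c Hc.
have [f [I1 I2 I3]] := Inv_all Hc (leqnn (size cl)).
have finj : injective f by move=> x w; apply: I2; apply: idx_lt.
have Hedge : forall x w, eG x0 (f x) (f w) = e x w.
  move=> x w; case: (eqVneq x w) => [<-|nxw].
    by rewrite /eG eqxx eirr.
  rewrite /eG; have -> : f x != f w by apply: contra_neq nxw; apply: finj.
  rewrite /= !I1 ?idx_lt //.
  case: (boolP (idx x == idx w)) => H /=.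
    by symmetry; apply: repl_edge; rewrite // -idx_eq.
  symmetry; apply: unif; rewrite -?idx_eq ?idx_rep ?I1 ?idx_lt //.
exists f; split => //; split => // x w E.
apply/eqP; apply: contraT => nxw.
case: (boolP (e x w)) => Hxw.
  have := Hc (f x) (f w); rewrite Hedge => /(_ Hxw); by rewrite E.
have Hn : idx x != idx w.
  by apply: contra Hxw; rewrite idx_eq => /repl_edge; apply.
case: (ltngtP (idx x) (idx w)) Hn => // H _.
  by have := I3 w x (idx_lt w) H; rewrite esym E eqxx => /(_ Hxw).
by have := I3 x w (idx_lt x) H Hxw; rewrite E eqxx.
Qed.


Definition NA (C A : {set T}) := [forall (c | c \in C), forall (a | a \in A), ~~ e c a].
Definition wt (C A : {set T}) := #|C| * NA C A.
Definition Rsum (l : seq {set T}) :=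
  \sum_(A <- l) \sum_(C <- l) (index C l < index A l) * wt C A.

Lemma card_sumb (b : pred T) : #|[set z | b z]| = \sum_z b z.
Proof.
rewrite -sum1_card big_mkcond /=; apply: eq_bigr => z _; rewrite inE.
by case: (b z).
Qed.

Lemma n_i_repr i : i < size cl ->
  n_i e cl i = \sum_(j < size cl) (j < i) * wt (nth set0 cl j) (nth set0 cl i).
Proof.
move=> Hi; have [p [Hp Hpi]] := pick_cl Hi.
rewrite (n_i_eq Hi Hp) card_sumb.
have -> : \sum_z ((idx z < i) && ~~ e p z : nat) =
   \sum_z \sum_(j < size cl) (idx z == j) * ((j < i) && ~~ e p z).
  apply: eq_bigr => z _; rewrite (bigD1 (Ordinal (idx_lt z))) //= eqxx mul1n.
  rewrite big1 ?addn0 // => j Hj; suff -> : (idx z == j) = false by [].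
  by apply/negbTE; apply: contra Hj => /eqP H; apply/eqP/val_inj.
rewrite exchange_big /=; apply: eq_bigr => j _.
case: (ltnP j i) => Hji; last first.
  by rewrite mul0n big1 // => z _; rewrite andFb; case: (_ == _).
rewrite mul1n /wt.
have Hj : j < size cl by [].
have -> : \sum_z (idx z == j) * (true && ~~ e p z) =
    #|[set z | (idx z == j) && ~~ e p z]|.
  by rewrite (card_sumb (fun z => (idx z == j) && ~~ e p z)); apply: eq_bigr => z _; case: (idx z == j); rewrite ?mul1n ?mul0n.
case: (boolP (NA _ _)) => HNA.
  rewrite muln1; apply: eq_card => z; rewrite !inE mem_nth_cl //.
  case: (eqVneq (idx z) j) => //= Hz.
  have := forall_inP HNA z; rewrite mem_nth_cl // Hz eqxx => /(_ isT) /forall_inP.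
  by move/(_ p); rewrite mem_nth_cl // Hpi eqxx esym => /(_ isT).
rewrite muln0; apply: eq_card0 => z; rewrite !inE.
case: (eqVneq (idx z) j) => //= Hz.
move/forall_inPn: HNA => [c Hc /forall_inPn [a Ha]]; rewrite negbK => Hca.
rewrite mem_nth_cl // in Hc; rewrite mem_nth_cl // in Ha.
rewrite (unif (x' := a) (w' := c)); first by rewrite esym Hca.
- by rewrite -idx_eq Hpi eq_sym.
- by rewrite -idx_eq Hz eq_sym.
- by rewrite -idx_eq Hpi Hz neq_ltn Hji orbT.
Qed.

Lemma n_sum_repr : n_sum e cl = Rsum cl.
Proof.
rewrite /n_sum /Rsum (big_nth set0) big_mkord; apply: eq_bigr => i _.
rewrite n_i_repr // (big_nth set0) big_mkord; apply: eq_bigr => j _.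
by rewrite !index_uniq // Hcl.1.
Qed.

End Repl.

Section Opt.
Variables (T : finType) (e : rel T).
Hypothesis esym : symmetric e.

Definition mm (C A : {set T}) := (C != A) * (minn #|C| #|A| * NA e C A).
Definition Xs (l : seq {set T}) (q : {set T} -> nat) :=
  \sum_(A <- l) \sum_(C <- l) (q C < q A) * mm C A.

Lemma NA_sym C A : NA e C A = NA e A C.
Proof.
by apply/idP/idP => /forall_inP H; apply/forall_inP => a Ha; apply/forall_inP => c Hc;
  rewrite esym; apply: (forall_inP (H c Hc)).
Qed.

Lemma mm_sym C A : mm C A = mm A C.
Proof. by rewrite /mm eq_sym minnC NA_sym. Qed.

Lemma Xs_double l q : {in l &, injective q} ->
  Xs l q + Xs l q = \sum_(A <- l) \sum_(C <- l) mm C A.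
Proof.
move=> Hq; rewrite {2}/Xs exchange_big /Xs -big_split /=.
apply: eq_big_seq => A HA; rewrite -big_split; apply: eq_big_seq => C HC /=.
case: (eqVneq C A) => [->|nCA]; first by rewrite /mm eqxx /= !mul0n !muln0.
rewrite [mm A C]mm_sym.
have : q C != q A by apply: contra_neq nCA; apply: Hq.
by case: ltngtP => // _ _; rewrite ?mul1n ?mul0n ?addn0.
Qed.

Lemma Rsum_ge l : Xs l (index^~ l) <= Rsum e l.
Proof.
apply: leq_sum => A _; apply: leq_sum => C _.
case: (index C l < index A l); rewrite ?mul0n // !mul1n /mm /wt.
case: (C != A); rewrite ?mul0n // mul1n.
by apply: leq_mul => //; apply: geq_minl.
Qed.

Lemma Rsum_sorted l : uniq l -> sorted (fun A B : {set T} => #|A| <= #|B|) l ->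
  Rsum e l = Xs l (index^~ l).
Proof.
move=> Hu Hs; apply: eq_big_seq => A HA; apply: eq_big_seq => C HC.
case: (ltnP (index C l) (index A l)) => H; last by rewrite /= !mul0n.
have tr : transitive (fun A B : {set T} => #|A| <= #|B|).
  by move=> B A' C' H1 H2; apply: leq_trans H1 H2.
have := sorted_ltn_nth tr set0 Hs; move/(_ (index C l) (index A l)).
rewrite !inE !index_mem HA HC !nth_index // => /(_ isT isT H) Hle.
have CA : C != A by apply: contraTneq H => ->; rewrite ltnn.
by rewrite /mm /wt CA (minn_idPl Hle) !mul1n.
Qed.

End Opt.

Lemma transport (T : finType) (e : rel T) (V : finType) (eG : rel V) N :
  simple_graph eG -> rainbow_forcing e eG -> #|V| <= N -> rho_le e N.
Proof.
move=> [Gs Gi] HF HN; exists #|V|; split => //.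
exists (fun i j => eG (enum_val i) (enum_val j)); split.
  by split => [i j|i]; [exact: Gs | exact: Gi].
move=> c Hc.
have Hc' : proper_coloring eG (fun v => c (enum_rank v)).
  by move=> u v H; apply: Hc; rewrite !enum_rankK.
have [f [Hf1 [Hf2 Hf3]]] := HF _ Hc'.
exists (fun x => enum_rank (f x)); split; last split.
- by move=> x y /enum_rank_inj /Hf1.
- by move=> x y; rewrite !enum_rankK.
- exact: Hf3.
Qed.

Theorem theorem3p1 (T : finType) (e : rel T) (He : simple_graph e)
    (cl : seq {set T}) (Hcl : repl_ordering e cl) :
  rho_le e (#|T| + n_sum e cl) /\
  (sorted (fun A B : {set T} => #|A| <= #|B|) cl ->
     forall cl' : seq {set T}, repl_ordering e cl' -> n_sum e cl <= n_sum e cl').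
Proof.
have [esym eirr] := He.
split.
  case: (pickP (@predT T)) => [x0 _|Hn].
    apply: (transport (eG_simple esym cl x0) (forcing esym eirr Hcl (x0 := x0))).
    by rewrite card_VV.
  have F : T -> False by move=> x; have := Hn x.
  exists 0; split => //; exists (fun _ _ => false); split; first by [].
  move=> c _; exists (fun x => False_rect _ (F x)).
  by split; [|split] => x; case: (F x).
move=> Hs cl' Hcl'.
rewrite (n_sum_repr esym Hcl) (n_sum_repr esym Hcl').
rewrite (Rsum_sorted e Hcl.1 Hs).
have Hmem : cl =i cl'.
  move=> A; apply/idP/idP => H; [apply/Hcl'.2; apply/Hcl.2 | apply/Hcl.2; apply/Hcl'.2] => //.
have Hperm : perm_eq cl cl' by apply: uniq_perm; [exact: Hcl.1 | exact: Hcl'.1 |].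
have inj1 : {in cl &, injective (index^~ cl)}.
  by move=> A C HA HC E; rewrite -(nth_index set0 HA) E nth_index.
have inj2 : {in cl &, injective (index^~ cl')}.
  move=> A C HA HC E; rewrite Hmem in HA; rewrite Hmem in HC.
  by rewrite -(nth_index set0 HA) E nth_index.
have H1 := Xs_double esym inj1; have H2 := Xs_double esym inj2.
have -> : Xs e cl (index^~ cl) = Xs e cl' (index^~ cl').
  have -> : Xs e cl (index^~ cl) = Xs e cl (index^~ cl').
    by apply: double_inj; rewrite -!addnn H1 H2.
  rewrite /Xs (perm_big _ Hperm); apply: eq_bigr => A _; exact: perm_big.
exact: Rsum_ge.
Qed.
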